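(* Let $P,F,A_I,A_O,B_I,B_O$ be finite-dimensional Hilbert spaces with $d_{A_I}=d_{A_O}=:d_A$, $d_{B_I}=d_{B_O}=:d_B$, $d_P=d_F$, and let $W=|w\rangle\langle w|$ be a pure process on $PFA_IA_OB_IB_O$ with induced map $\mathcal{G}$. Then $\mathcal{G}$ admits a decomposition into consistent causal reference frames: there exist finite-dimensional Hilbert spaces $E_A,E_B$ with $d_P=d_Ad_{E_A}=d_Bd_{E_B}$, a frame function $(\Pi_A,\Phi_A)$ for Alice and a frame function $(\Pi_B,\Phi_B)$ for Bob such that for all unitaries $U_A:A_I\to A_O$ and $U_B:B_I\to B_O$, $$\mathcal{G}(U_A,U_B)=\Phi_A(U_B)(U_A\otimes\mathbb{1}^{E_A})\Pi_A(U_B)=\Phi_B(U_A)(U_B\otimes\mathbb{1}^{E_B})\Pi_B(U_A).$$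
   Context: All Hilbert spaces are finite-dimensional with fixed computational bases; juxtaposition denotes tensor product. For a linear map $K:X\to Y$, $|K\rangle\!\rangle^{XY}=\sum_i|i\rangle^X\otimes(K|i\rangle)^Y$. For $|w\rangle=\sum_{x,y}w_{xy}|x\rangle^X|y\rangle^Y$, $|w\rangle^{T_X}:=\sum_{x,y}w_{xy}|y\rangle\langle x|:X\to Y$; for an operator $W$ on $X\otimes Y$, $W^{T_X}$ is its partial transpose on $X$. The Choi operator of $\mathcal{M}:\mathcal{L}(X)\to\mathcal{L}(Y)$ is $\sum_{ij}|i\rangle\langle j|\otimes\mathcal{M}(|i\rangle\langle j|)$. A process matrix is an operator $W$ on $PFA_IA_OB_IB_O$ such that for all finite-dimensional ancilla spaces $A_I',A_O',B_I',B_O'$ and all CPTP maps $\mathcal{M}_x:\mathcal{L}(A_IA_I')\to\mathcal{L}(A_OA_O')$, $\mathcal{M}_y:\mathcal{L}(B_IB_I')\to\mathcal{L}(B_OB_O')$ with Choi operators $M_x,M_y$, the operator $\mathrm{tr}_{A_IA_OB_IB_O}\big(W^{T_{A_IA_OB_IB_O}}(M_x\otimes M_y)\big)$ is the Choi operator of a CPTP map from $PA_I'B_I'$ to $FA_O'B_O'$. It is pure if for all ancilla spaces with $d_{A_I}d_{A_I'}=d_{A_O}d_{A_O'}$, $d_{B_I}d_{B_I'}=d_{B_O}d_{B_O'}$, $d_Pd_{A_I'}d_{B_I'}=d_Fd_{A_O'}d_{B_O'}$ and all unitaries $U:A_IA_I'\to A_OA_O'$, $V:B_IB_I'\to B_OB_O'$,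 the operator $\mathrm{tr}_{A_IA_OB_IB_O}\big(W^{T_{A_IA_OB_IB_O}}(|U\rangle\!\rangle\langle\!\langle U|\otimes|V\rangle\!\rangle\langle\!\langle V|)\big)$ is the Choi operator of a unitary channel. The induced map of $W=|w\rangle\langle w|$ sends linear $U:A_I\to A_O$, $V:B_I\to B_O$ to $\mathcal{G}(U,V):P\to F$ defined by $|\mathcal{G}(U,V)\rangle\!\rangle^{PF}=|w\rangle^{T_{A_IA_OB_IB_O}}(|U\rangle\!\rangle^{A_IA_O}\otimes|V\rangle\!\rangle^{B_IB_O})$. A frame function for Alice is a pair $(\Pi_A,\Phi_A)$ of functions sending linear maps $T_B:B_I\to B_O$ to linear maps $\Pi_A(T_B):P\to A_I\otimes E_A$, $\Phi_A(T_B):A_O\otimes E_A\to F$ which are unitary whenever $T_B$ is unitary (no linearity required); a frame function for Bob is defined symmetrically with $\Pi_B(T_A):P\to B_I\otimes E_B$, $\Phi_B(T_A):B_O\otimes E_B\to F$ for linear $T_A:A_I\to A_O$. *)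

(* Defs.v *)
From mathcomp Require Import all_boot all_order all_algebra.
From mathcomp Require Import complex mxtens.
From mathcomp Require Import reals.

Set Implicit Arguments.
Unset Strict Implicit.
Unset Printing Implicit Defensive.

Import GRing.Theory Num.Theory.
Local Open Scope ring_scope.

(* Conventions: a Hilbert space of dimension d has computational basis 'I_d;
   a linear map K : X -> Y (dims dX, dY) is a matrix 'M_(dY, dX) acting on
   column vectors; the tensor product X (x) Y has dimension dX * dY with basis
   index mxtens_index (x, y) (first factor most significant), and A *t B is the
   Kronecker product. *)

Section Defs.
Variable C : numClosedFieldType.

Definition adj m n (A : 'M[C]_(m, n)) : 'M[C]_(n, m) := (map_mx Num.conj A)^T.

(* unitary (possibly between spaces given with different index sizes;
   both identities are required, which forces equal dimensions) *)
Definition unitary_mx m n (A : 'M[C]_(m, n)) : Prop :=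
  adj A *m A = 1%:M /\ A *m adj A = 1%:M.

Definition psd n (A : 'M[C]_n) : Prop :=
  forall x : 'cV[C]_n, 0 <= (adj x *m A *m x) 0 0.

Definition is_linear_map n m (f : 'M[C]_n -> 'M[C]_m) : Prop :=
  forall (a : C) (X Y : 'M[C]_n), f (a *: X + Y) = a *: f X + f Y.

(* block (i,j) of an operator on X (x) K, as an operator on K *)
Definition mxblk n k (rho : 'M[C]_(n * k)) (i j : 'I_n) : 'M[C]_k :=
  \matrix_(a, b) rho (mxtens_index (i, a)) (mxtens_index (j, b)).

(* (f (x) id_K) rho for f linear *)
Definition ampl n m k (f : 'M[C]_n -> 'M[C]_m) (rho : 'M[C]_(n * k)) : 'M[C]_(m * k) :=
  \sum_(i < n) \sum_(j < n) (f (delta_mx i j) *t mxblk rho i j).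

Definition completely_positive n m (f : 'M[C]_n -> 'M[C]_m) : Prop :=
  forall (k : nat) (rho : 'M[C]_(n * k)), psd rho -> psd (ampl f rho).

Definition trace_preserving n m (f : 'M[C]_n -> 'M[C]_m) : Prop :=
  forall X : 'M[C]_n, \tr (f X) = \tr X.

Definition choi n m (f : 'M[C]_n -> 'M[C]_m) : 'M[C]_(n * m) :=
  \sum_(i < n) \sum_(j < n) (delta_mx i j *t f (delta_mx i j)).

Definition is_cptp_choi n m (J : 'M[C]_(n * m)) : Prop :=
  exists f : 'M[C]_n -> 'M[C]_m,
    [/\ is_linear_map f, completely_positive f, trace_preserving f & J = choi f].

Definition is_unitary_choi n m (J : 'M[C]_(n * m)) : Prop :=
  exists X : 'M[C]_(m, n),
    unitary_mx X /\ J = choi (fun rho : 'M[C]_n => X *m rho *m adj X).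

(* |K>> = sum_i |i> (x) K|i>  for K : X -> Y *)
Definition vecK m n (K : 'M[C]_(m, n)) : 'cV[C]_(n * m) :=
  \matrix_(k, _) K (mxtens_unindex k).2 (mxtens_unindex k).1.

Definition ix2 a b (i1 : 'I_a) (i2 : 'I_b) : 'I_(a * b) := mxtens_index (i1, i2).
Definition ix3 a b c (i1 : 'I_a) (i2 : 'I_b) (i3 : 'I_c) : 'I_(a * b * c) :=
  ix2 (ix2 i1 i2) i3.
Definition ix6 a b c d e g (i1 : 'I_a) (i2 : 'I_b) (i3 : 'I_c) (i4 : 'I_d)
  (i5 : 'I_e) (i6 : 'I_g) : 'I_(a * b * c * d * e * g) :=
  ix2 (ix2 (ix2 (ix3 i1 i2 i3) i4) i5) i6.

Definition ux2 a b (k : 'I_(a * b)) : 'I_a * 'I_b := mxtens_unindex k.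
Definition ux3 a b c (k : 'I_(a * b * c)) : 'I_a * 'I_b * 'I_c :=
  ((ux2 (ux2 k).1).1, (ux2 (ux2 k).1).2, (ux2 k).2).

Section Process.
Variables dP dF dAI dAO dBI dBO : nat.
Local Notation dS := (dP * dF * dAI * dAO * dBI * dBO).

Definition proj_of (w : 'cV[C]_dS) : 'M[C]_dS := w *m adj w.

(* tr_{AI AO BI BO}( W^{T_{AI AO BI BO}} (Mx (x) My) ), an operator on
   P F AI' AO' BI' BO', written as an operator on (P AI' BI') (x) (F AO' BO'),
   where Mx acts on AI AI' AO AO' and My on BI BI' BO BO'. *)
Definition link nI nO mI mO (W : 'M[C]_dS)
  (Mx : 'M[C]_(dAI * nI * (dAO * nO))) (My : 'M[C]_(dBI * mI * (dBO * mO)))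
  : 'M[C]_(dP * nI * mI * (dF * nO * mO)) :=
  \matrix_(r, c)
   (let: (p, ai', bi') := ux3 (ux2 r).1 in
    let: (f, ao', bo') := ux3 (ux2 r).2 in
    let: (p2, ai2', bi2') := ux3 (ux2 c).1 in
    let: (f2, ao2', bo2') := ux3 (ux2 c).2 in
    \sum_(ai < dAI) \sum_(ao < dAO) \sum_(bi < dBI) \sum_(bo < dBO)
    \sum_(ai2 < dAI) \sum_(ao2 < dAO) \sum_(bi2 < dBI) \sum_(bo2 < dBO)
      W (ix6 p f ai ao bi bo) (ix6 p2 f2 ai2 ao2 bi2 bo2)
      * Mx (ix2 (ix2 ai ai') (ix2 ao ao')) (ix2 (ix2 ai2 ai2') (ix2 ao2 ao2'))
      * My (ix2 (ix2 bi bi') (ix2 bo bo')) (ix2 (ix2 bi2 bi2') (ix2 bo2 bo2'))).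

Definition is_process (W : 'M[C]_dS) : Prop :=
  forall (nI nO mI mO : nat), (0 < nI)%N -> (0 < nO)%N -> (0 < mI)%N -> (0 < mO)%N ->
  forall (Mx : 'M[C]_(dAI * nI * (dAO * nO))) (My : 'M[C]_(dBI * mI * (dBO * mO))),
    is_cptp_choi Mx -> is_cptp_choi My ->
    is_cptp_choi (link W Mx My).

Definition is_pure (W : 'M[C]_dS) : Prop :=
  forall (nI nO mI mO : nat), (0 < nI)%N -> (0 < nO)%N -> (0 < mI)%N -> (0 < mO)%N ->
    (dAI * nI = dAO * nO)%N -> (dBI * mI = dBO * mO)%N ->
    (dP * nI * mI = dF * nO * mO)%N ->
  forall (U : 'M[C]_(dAO * nO, dAI * nI)) (V : 'M[C]_(dBO * mO, dBI * mI)),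
    unitary_mx U -> unitary_mx V ->
    is_unitary_choi (link W (vecK U *m adj (vecK U)) (vecK V *m adj (vecK V))).

Definition is_pure_process (W : 'M[C]_dS) : Prop := is_process W /\ is_pure W.

(* induced map: |G(U,V)>>^{PF} = |w>^{T_{AI AO BI BO}} (|U>> (x) |V>>) *)
Definition induced_map (w : 'cV[C]_dS) (U : 'M[C]_(dAO, dAI)) (V : 'M[C]_(dBO, dBI))
  : 'M[C]_(dF, dP) :=
  \matrix_(f, p)
    \sum_(ai < dAI) \sum_(ao < dAO) \sum_(bi < dBI) \sum_(bo < dBO)
      w (ix6 p f ai ao bi bo) 0 * U ao ai * V bo bi.

Definition frame_function_A dEA
  (Pi : 'M[C]_(dBO, dBI) -> 'M[C]_(dAI * dEA, dP))
  (Phi : 'M[C]_(dBO, dBI) -> 'M[C]_(dF, dAO * dEA)) : Prop :=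
  forall T : 'M[C]_(dBO, dBI), unitary_mx T -> unitary_mx (Pi T) /\ unitary_mx (Phi T).

Definition frame_function_B dEB
  (Pi : 'M[C]_(dAO, dAI) -> 'M[C]_(dBI * dEB, dP))
  (Phi : 'M[C]_(dAO, dAI) -> 'M[C]_(dF, dBO * dEB)) : Prop :=
  forall T : 'M[C]_(dAO, dAI), unitary_mx T -> unitary_mx (Pi T) /\ unitary_mx (Phi T).

End Process.
End Defs.

(* Main.v *)
Require Import Defs.
From mathcomp Require Import all_boot all_order all_algebra.
From mathcomp Require Import complex mxtens.
From mathcomp Require Import reals.
From mathcomp Require Import spectral.
From Stdlib Require Import Classical IndefiniteDescription.
From mathcomp Require Import ring.

Import GRing.Theory Num.Theory.
Local Open Scope ring_scope.

Set Implicit Arguments.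
Unset Strict Implicit.
Unset Printing Implicit Defensive.

Section Gen.
Variable C : numClosedFieldType.

Lemma adjE m n (A : 'M[C]_(m, n)) i j : adj A i j = (A j i)^*.
Proof. by rewrite /adj !mxE. Qed.

Lemma adjK m n (A : 'M[C]_(m, n)) : adj (adj A) = A.
Proof. by apply/matrixP => i j; rewrite !adjE conjCK. Qed.

Lemma adjM m n p (A : 'M[C]_(m, n)) (B : 'M[C]_(n, p)) :
  adj (A *m B) = adj B *m adj A.
Proof.
apply/matrixP => i j; rewrite adjE !mxE rmorph_sum; apply: eq_bigr => k _.
by rewrite !adjE rmorphM mulrC.
Qed.

Lemma adjD m n (A B : 'M[C]_(m, n)) : adj (A + B) = adj A + adj B.
Proof. by apply/matrixP => i j; rewrite /adj !mxE rmorphD. Qed.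

Lemma adjZ m n (c : C) (A : 'M[C]_(m, n)) : adj (c *: A) = c^* *: adj A.
Proof. by apply/matrixP => i j; rewrite /adj !mxE rmorphM. Qed.

Lemma adjN m n (A : 'M[C]_(m, n)) : adj (- A) = - adj A.
Proof. by apply/matrixP => i j; rewrite /adj !mxE rmorphN. Qed.

Lemma adjB m n (A B : 'M[C]_(m, n)) : adj (A - B) = adj A - adj B.
Proof. by rewrite adjD adjN. Qed.

Lemma adj0 m n : adj (0 : 'M[C]_(m, n)) = 0.
Proof. by apply/matrixP => i j; rewrite /adj !mxE rmorph0. Qed.

Lemma adj_sum m n (I : finType) (F : I -> 'M[C]_(m, n)) :
  adj (\sum_i F i) = \sum_i adj (F i).
Proof.
apply/matrixP => a b; rewrite adjE !summxE rmorph_sum; apply: eq_bigr => i _.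
by rewrite adjE.
Qed.

Lemma adj_scalar n (c : C) : adj (c%:M : 'M[C]_n) = (c^*)%:M.
Proof.
apply/matrixP => i j; rewrite adjE !mxE eq_sym.
by case: (j == i); rewrite ?rmorph0 ?rmorph1 ?mulr1n ?mulr0n ?rmorphMn.
Qed.

Lemma adj1 n : adj (1%:M : 'M[C]_n) = 1%:M.
Proof. by rewrite adj_scalar rmorph1. Qed.

Lemma adj_tens m n p q (A : 'M[C]_(m, n)) (B : 'M[C]_(p, q)) :
  adj (A *t B) = adj A *t adj B.
Proof. by apply/matrixP => i j; rewrite /adj !mxE rmorphM. Qed.

Lemma tens11 m n : (1%:M : 'M[C]_m) *t (1%:M : 'M[C]_n) = 1%:M.
Proof.
apply/matrixP => i j.
case: (mxtens_indexP i) => a b; case: (mxtens_indexP j) => a' b'.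
rewrite tensmxE !mxE -natrM; congr (_%:R).
rewrite -!val_eqE /=; rewrite eq_addl_mul ?ltn_ord // xpair_eqE mulnb.
by [] || by rewrite !val_eqE.
Qed.

Lemma unitary_mul m (A B : 'M[C]_m) :
  unitary_mx A -> unitary_mx B -> unitary_mx (A *m B).
Proof.
move=> [A1 A2] [B1 B2]; split; rewrite adjM.
  by rewrite mulmxA -(mulmxA (adj B)) A1 mulmx1 B1.
by rewrite mulmxA -(mulmxA A) B2 mulmx1 A2.
Qed.

Lemma unitary_adj m n (A : 'M[C]_(m, n)) : unitary_mx A -> unitary_mx (adj A).
Proof. by move=> [A1 A2]; split; rewrite adjK. Qed.

Lemma unitary_tens m n p q (A : 'M[C]_(m, n)) (B : 'M[C]_(p, q)) :
  unitary_mx A -> unitary_mx B -> unitary_mx (A *t B).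
Proof.
move=> [A1 A2] [B1 B2]; split; rewrite adj_tens tensmx_mul ?A1 ?B1 ?A2 ?B2;
  exact: tens11.
Qed.

Lemma unitary1 n : unitary_mx (1%:M : 'M[C]_n).
Proof. by split; rewrite adj1 mulmx1. Qed.

End Gen.

Section Blk.
Variable C : numClosedFieldType.

Lemma sum_tens a b (G : 'I_(a*b) -> C) :
  \sum_k G k = \sum_i \sum_j G (mxtens_index (i, j)).
Proof.
rewrite pair_big /= (reindex (@mxtens_index a b)) /=.
  by apply: eq_bigr => -[i j].
by exists (@mxtens_unindex a b) => k _; rewrite (mxtens_indexK, mxtens_unindexK).
Qed.

Definition blk d n (F : 'I_n -> 'I_n -> 'M[C]_d) : 'M[C]_(d * n) :=
  \matrix_(r, c) F (mxtens_unindex r).2 (mxtens_unindex c).2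
                   (mxtens_unindex r).1 (mxtens_unindex c).1.

Lemma blkE d n (F : 'I_n -> 'I_n -> 'M[C]_d) i x j y :
  blk F (mxtens_index (i, x)) (mxtens_index (j, y)) = F x y i j.
Proof. by rewrite mxE !mxtens_indexK. Qed.

Lemma blk_mul d n (F G : 'I_n -> 'I_n -> 'M[C]_d) :
  blk F *m blk G = blk (fun x y => \sum_z F x z *m G z y).
Proof.
apply/matrixP => r c.
case: (mxtens_indexP r) => i x; case: (mxtens_indexP c) => j y.
rewrite blkE !mxE sum_tens summxE exchange_big /=; apply: eq_bigr => z _.
rewrite mxE; apply: eq_bigr => k _; by rewrite !blkE.
Qed.

Lemma blk_adj d n (F : 'I_n -> 'I_n -> 'M[C]_d) :
  adj (blk F) = blk (fun x y => adj (F y x)).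
Proof.
apply/matrixP => r c.
case: (mxtens_indexP r) => i x; case: (mxtens_indexP c) => j y.
by rewrite adjE !blkE adjE.
Qed.

Lemma blk1 d n : (1%:M : 'M[C]_(d * n)) = blk (fun x y => (x == y)%:R *: 1%:M).
Proof. by rewrite -tens11; apply/matrixP => r c;
case: (mxtens_indexP r) => i x; case: (mxtens_indexP c) => j y;
rewrite blkE tensmxE !mxE mulrC. Qed.

Lemma blk_inj d n (F G : 'I_n -> 'I_n -> 'M[C]_d) :
  blk F = blk G -> forall x y, F x y = G x y.
Proof.
move=> e x y; apply/matrixP => i j.
by move/matrixP: e => /(_ (mxtens_index (i, x)) (mxtens_index (j, y))); rewrite !blkE.
Qed.

Lemma blk_diag d n (A : 'M[C]_d) : blk (fun x y => (x == y)%:R *: A) = A *t (1%:M : 'M_n).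
Proof. by apply/matrixP => r c;
case: (mxtens_indexP r) => i x; case: (mxtens_indexP c) => j y;
rewrite blkE tensmxE !mxE mulrC. Qed.

Lemma tens1_unitary d n (A : 'M[C]_d) : (0 < n)%N ->
  unitary_mx (A *t (1%:M : 'M_n)) -> unitary_mx A.
Proof.
move=> n0 [U1 U2].
have key : forall B : 'M[C]_d, B *t (1%:M : 'M_n) = 1%:M -> B = 1%:M.
  move=> B /matrixP e; apply/matrixP => i j.
  move: (e (mxtens_index (i, Ordinal n0)) (mxtens_index (j, Ordinal n0))).
  by rewrite tensmxE -(tens11 C d n) tensmxE !mxE eqxx !mulr1.
split; apply: key.
  by apply: etrans U1; rewrite adj_tens tensmx_mul adj1 mulmx1.
by apply: etrans U2; rewrite adj_tens tensmx_mul adj1 mulmx1.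
Qed.

Lemma unitary_blk d n (F : 'I_n -> 'I_n -> 'M[C]_d) :
  (forall x y, \sum_z adj (F z x) *m F z y = (x == y)%:R *: 1%:M) ->
  (forall x y, \sum_z F x z *m adj (F y z) = (x == y)%:R *: 1%:M) ->
  unitary_mx (blk F).
Proof.
move=> h1 h2; split; rewrite blk_adj blk_mul blk1; apply/matrixP => r c;
case: (mxtens_indexP r) => i x; case: (mxtens_indexP c) => j y;
by rewrite !blkE ?h1 ?h2.
Qed.

Lemma blk_unitary d n (F : 'I_n -> 'I_n -> 'M[C]_d) : unitary_mx (blk F) ->
  (forall x y, \sum_z adj (F z x) *m F z y = (x == y)%:R *: 1%:M) /\
  (forall x y, \sum_z F x z *m adj (F y z) = (x == y)%:R *: 1%:M).
Proof.
move=> [h1 h2]; rewrite blk_adj blk_mul blk1 in h1; rewrite blk_adj blk_mul blk1 in h2.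
by split => x y; [apply: (blk_inj h1) | apply: (blk_inj h2)].
Qed.

End Blk.

Section Link.
Variable C : numClosedFieldType.

Lemma unitary_reindex N M (Y : 'M[C]_N) (Z : 'M[C]_M) (s : 'I_M -> 'I_N) :
  bijective s -> (forall i j, Z i j = Y (s i) (s j)) -> unitary_mx Y -> unitary_mx Z.
Proof.
move=> bs hZ [Y1 Y2]; have inj_s := bij_inj bs.
split; apply/matrixP => i j.
  move/matrixP: Y1 => /(_ (s i) (s j)); rewrite !mxE (inj_eq inj_s) => <-.
  rewrite (reindex s) /=; last by case: bs => g sg gs; exists g => k _.
  by apply: eq_bigr => k _; rewrite !adjE !hZ.
move/matrixP: Y2 => /(_ (s i) (s j)); rewrite !mxE (inj_eq inj_s) => <-.
rewrite (reindex s) /=; last by case: bs => g sg gs; exists g => k _.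
by apply: eq_bigr => k _; rewrite !adjE !hZ.
Qed.

Lemma rank1 N (g x : 'cV[C]_N) : g *m adj g = x *m adj x -> x != 0 ->
  exists c : C, c * c^* = 1 /\ g = c *: x.
Proof.
move=> e xn0.
have [k xk] : exists k, x k 0 != 0.
  apply/existsP; apply: contraR xn0 => /existsPn h; apply/eqP/matrixP => i j.
  by rewrite (ord1 j) mxE; move: (h i); rewrite negbK => /eqP.
have ek r : g r 0 * (g k 0)^* = x r 0 * (x k 0)^*.
  by move/matrixP: e => /(_ r k); rewrite !mxE !big_ord1 !adjE.
have gk : g k 0 != 0.
  by apply: contraNneq xk => gk0; move: (ek k); rewrite gk0 mul0r => /eqP;
     rewrite eq_sym mul_conjC_eq0.
have gk' : (g k 0)^* != 0 by rewrite conjC_eq0.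
have xk' : (x k 0)^* != 0 by rewrite conjC_eq0.
exists ((x k 0)^* / (g k 0)^*); split.
  have cd (a b : C) : (a / b)^* = a^* / b^* by rewrite rmorphM fmorphV.
  rewrite cd !conjCK; have ekk := ek k.
  rewrite mulrACA -invfM [(g k 0)^* * _]mulrC ekk [x k 0 * _]mulrC.
  by rewrite mulfV // mulf_neq0.
apply/matrixP => r j; rewrite (ord1 j) mxE.
by rewrite mulrC mulrA -ek -mulrA divff // mulr1.
Qed.

Lemma deltaY n p (i j : 'I_n) (Y : 'M[C]_(n, p)) l b :
  (delta_mx i j *m Y) l b = (l == i)%:R * Y j b.
Proof.
rewrite mxE (bigD1 j) //= [X in _ + X]big1 ?addr0 => [|k kj]; last by rewrite !mxE (negbTE kj) andbF mul0r.
by rewrite !mxE eqxx andbT.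
Qed.

Lemma XdY m n p (X : 'M[C]_(m, n)) (Y : 'M[C]_(n, p)) i j a b :
  (X *m delta_mx i j *m Y) a b = X a i * Y j b.
Proof.
rewrite -mulmxA mxE (bigD1 i) //= [X in _ + X]big1 ?addr0 => [|l li]; last by rewrite deltaY (negbTE li) mul0r mulr0.
by rewrite deltaY eqxx mul1r.
Qed.

Lemma choi_unitary n m (X : 'M[C]_(m, n)) :
  choi (fun rho : 'M[C]_n => X *m rho *m adj X) = vecK X *m adj (vecK X).
Proof.
apply/matrixP => r c.
case: (mxtens_indexP r) => i a; case: (mxtens_indexP c) => j b.
rewrite /choi summxE (bigD1 i) //= [X in _ + X]big1 ?addr0 => [|i' ii']; last first.
  rewrite summxE big1 // => j' _; rewrite tensmxE !mxE eq_sym (negbTE ii') /=.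
  by rewrite mul0r.
rewrite summxE (bigD1 j) //= [X in _ + X]big1 ?addr0 => [|j' jj']; last first.
  by rewrite tensmxE !mxE eqxx eq_sym (negbTE jj') /= mul0r.
rewrite tensmxE XdY !mxE !eqxx /= mul1r big_ord1 adjE !mxE !mxtens_indexK /=.
by [].
Qed.


Lemma sum4_mul (I1 I2 I3 I4 J1 J2 J3 J4 : finType) (f : I1 -> I2 -> I3 -> I4 -> C)
  (g : J1 -> J2 -> J3 -> J4 -> C) :
  (\sum_a \sum_b \sum_c \sum_e f a b c e) * (\sum_a \sum_b \sum_c \sum_e g a b c e) =
  \sum_a \sum_b \sum_c \sum_e \sum_a' \sum_b' \sum_c' \sum_e' f a b c e * g a' b' c' e'.
Proof.
rewrite mulr_suml; apply: eq_bigr => a _; rewrite mulr_suml; apply: eq_bigr => b _.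
rewrite mulr_suml; apply: eq_bigr => c _; rewrite mulr_suml; apply: eq_bigr => e _.
rewrite mulr_sumr; apply: eq_bigr => a' _; rewrite mulr_sumr; apply: eq_bigr => b' _.
rewrite mulr_sumr; apply: eq_bigr => c' _; rewrite mulr_sumr; apply: eq_bigr => e' _.
by [].
Qed.

Lemma conj_sum4 (I1 I2 I3 I4 : finType) (f : I1 -> I2 -> I3 -> I4 -> C) :
  (\sum_a \sum_b \sum_c \sum_e f a b c e)^* = \sum_a \sum_b \sum_c \sum_e (f a b c e)^*.
Proof.
rewrite rmorph_sum; apply: eq_bigr => a _; rewrite rmorph_sum; apply: eq_bigr => b _.
rewrite rmorph_sum; apply: eq_bigr => c _; rewrite rmorph_sum; apply: eq_bigr => e _.
by [].
Qed.

Section LinkPure.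
Variables (dP dF dAI dAO dBI dBO nI nO mI mO : nat).
Local Notation dS := (dP * dF * dAI * dAO * dBI * dBO)%N.

Definition gv (w : 'cV[C]_dS) (U : 'M[C]_(dAO * nO, dAI * nI)) (V : 'M[C]_(dBO * mO, dBI * mI))
  : 'cV[C]_(dP * nI * mI * (dF * nO * mO)) :=
  \matrix_(r, _) (let: (p, ai', bi') := ux3 (ux2 r).1 in
              let: (f, ao', bo') := ux3 (ux2 r).2 in
    \sum_(ai < dAI) \sum_(ao < dAO) \sum_(bi < dBI) \sum_(bo < dBO)
      w (ix6 p f ai ao bi bo) 0 * U (ix2 ao ao') (ix2 ai ai') * V (ix2 bo bo') (ix2 bi bi')).

Lemma link_pure w U V :
  link (proj_of w) (vecK U *m adj (vecK U)) (vecK V *m adj (vecK V)) = gv w U V *m adj (gv w U V).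
Proof.
apply/matrixP => r c.
rewrite mxE [RHS]mxE big_ord1 adjE !mxE.
rewrite /ux3 /=.
rewrite conj_sum4 sum4_mul.
do 8! (apply: eq_bigr => ? _).
rewrite /proj_of !mxE !big_ord1 !adjE !mxE /ix2 !mxtens_indexK /=.
have conjM (a b : C) : (a * b)^* = a^* * b^* by rewrite rmorphM.
rewrite !conjM; ring.
Qed.

End LinkPure.

End Link.

Section Pure.
Variable C : numClosedFieldType.

Lemma vecK_neq0 N (X : 'M[C]_N) : (0 < N)%N -> unitary_mx X -> vecK X != 0.
Proof.
move=> N0 [X1 _]; apply/eqP => h.
have X0 : X = 0.
  apply/matrixP => a b; move/matrixP: h => /(_ (mxtens_index (b, a)) ord0).
  by rewrite !mxE mxtens_indexK.
move: X1; rewrite X0 mulmx0 => /matrixP /(_ (Ordinal N0) (Ordinal N0)).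
by rewrite !mxE eqxx => /eqP; rewrite eq_sym oner_eq0.
Qed.

Lemma unitary_scale N (X : 'M[C]_N) (c : C) : c * c^* = 1 -> unitary_mx X -> unitary_mx (c *: X).
Proof.
move=> hc [X1 X2]; split; rewrite adjZ -scalemxAl -scalemxAr scalerA ?X1 ?X2.
  by rewrite mulrC hc scale1r.
by rewrite hc scale1r.
Qed.

Variables (dP dA dB : nat).
Variable w : 'cV[C]_(dP * dP * dA * dA * dB * dB).
Hypothesis hp : is_pure (proj_of w).
Hypothesis dP0 : (0 < dP)%N.

Lemma pure_to_unitary nI mI (U : 'M[C]_(dA * nI)) (V : 'M[C]_(dB * mI)) :
  (0 < nI)%N -> (0 < mI)%N -> unitary_mx U -> unitary_mx V ->
  unitary_mx (\matrix_(a, b) gv w U V (mxtens_index (b, a)) 0).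
Proof.
move=> n0 m0 hU hV.
case: (hp n0 n0 m0 m0 erefl erefl erefl hU hV) => X [hX eL].
move: eL; rewrite link_pure choi_unitary => eL.
have N0 : (0 < dP * nI * mI)%N by rewrite !muln_gt0 dP0 n0 m0.
have [c [hc eg]] := rank1 eL (vecK_neq0 N0 hX).
have -> : \matrix_(a, b) gv w U V (mxtens_index (b, a)) 0 = c *: X.
  apply/matrixP => a b; by rewrite eg !mxE mxtens_indexK.
exact: unitary_scale.
Qed.

End Pure.

Section PureAB.
Variable C : numClosedFieldType.
Variables (dP dA dB : nat).
Variable w : 'cV[C]_(dP * dP * dA * dA * dB * dB).
Hypothesis hp : is_pure (proj_of w).
Hypothesis dP0 : (0 < dP)%N.

Lemma pureA (UB : 'M[C]_dB) : unitary_mx UB -> forall F : 'I_2 -> 'I_2 -> 'M[C]_dA,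
  unitary_mx (blk F) -> unitary_mx (blk (fun x y => induced_map w (F x y) UB)).
Proof.
move=> hU F hF.
have := pure_to_unitary hp dP0 (nI:=2) (mI:=1) isT isT hF (unitary_tens hU (unitary1 C 1)).
apply: (unitary_reindex (s := fun k => mxtens_index (k, (ord0 : 'I_1)))).
  exists (fun t => (mxtens_unindex t).1) => k; first by rewrite mxtens_indexK.
  by case: (mxtens_indexP k) => a z; rewrite mxtens_indexK (ord1 z).
move=> i j; case: (mxtens_indexP i) => f x; case: (mxtens_indexP j) => p y.
rewrite blkE !mxE /ux3 /ux2 /ix2 !mxtens_indexK /=.
do 4! (apply: eq_bigr => ? _).
by rewrite blkE tensmxE !mxE mulr1.
Qed.

Lemma pureB (UA : 'M[C]_dA) : unitary_mx UA -> forall F : 'I_2 -> 'I_2 -> 'M[C]_dB,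
  unitary_mx (blk F) -> unitary_mx (blk (fun x y => induced_map w UA (F x y))).
Proof.
move=> hU F hF.
have := pure_to_unitary hp dP0 (nI:=1) (mI:=2) isT isT (unitary_tens hU (unitary1 C 1)) hF.
apply: (unitary_reindex (s := fun k => mxtens_index (mxtens_index ((mxtens_unindex k).1, (ord0 : 'I_1)), (mxtens_unindex k).2))).
  exists (fun t => mxtens_index ((mxtens_unindex (mxtens_unindex t).1).1, (mxtens_unindex t).2)) => k.
    by rewrite !mxtens_indexK /= mxtens_unindexK.
  case: (mxtens_indexP k) => a z; case: (mxtens_indexP a) => b o.
  by rewrite !mxtens_indexK /= (ord1 o).
move=> i j; case: (mxtens_indexP i) => f x; case: (mxtens_indexP j) => p y.
rewrite blkE !mxE /ux3 /ux2 /ix2 !mxtens_indexK /=.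
do 4! (apply: eq_bigr => ? _).
by rewrite blkE tensmxE !mxE mulr1.
Qed.

End PureAB.

From mathcomp Require Import all_fingroup.

Section Two.
Variable C : numClosedFieldType.

Definition i1 : 'I_2 := lift ord0 (ord0 : 'I_1).

Lemma ord2P (x : 'I_2) : x = ord0 \/ x = i1.
Proof. by case: x => [[|[|k]]] // p; [left|right]; apply: val_inj. Qed.

Lemma sum2 k l (G : 'I_2 -> 'M[C]_(k, l)) : \sum_z G z = G ord0 + G i1.
Proof. by rewrite big_ord_recl big_ord1. Qed.

Definition F2 d (A B C' D : 'M[C]_d) : 'I_2 -> 'I_2 -> 'M[C]_d :=
  fun x y => if x == ord0 then (if y == ord0 then A else B)
             else (if y == ord0 then C' else D).

Lemma F2E d (A B C' D : 'M[C]_d) :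
  [/\ F2 A B C' D ord0 ord0 = A, F2 A B C' D ord0 i1 = B,
      F2 A B C' D i1 ord0 = C' & F2 A B C' D i1 i1 = D].
Proof. by []. Qed.

Lemma blk_ext d n (F G : 'I_n -> 'I_n -> 'M[C]_d) :
  (forall x y, F x y = G x y) -> blk F = blk G.
Proof. by move=> e; apply/matrixP => r c; rewrite !mxE e. Qed.

Lemma unitary_F2 d (A B C' D : 'M[C]_d) :
  adj A *m A + adj C' *m C' = 1%:M -> adj A *m B + adj C' *m D = 0 ->
  adj B *m A + adj D *m C' = 0 -> adj B *m B + adj D *m D = 1%:M ->
  A *m adj A + B *m adj B = 1%:M -> A *m adj C' + B *m adj D = 0 ->
  C' *m adj A + D *m adj B = 0 -> C' *m adj C' + D *m adj D = 1%:M ->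
  unitary_mx (blk (F2 A B C' D)).
Proof.
move=> h1 h2 h3 h4 h5 h6 h7 h8; apply: unitary_blk => x y; rewrite sum2;
by case: (ord2P x) => ->; case: (ord2P y) => ->; rewrite /F2 /= ?scale1r ?scale0r.
Qed.

Lemma F2_unitary d (A B C' D : 'M[C]_d) : unitary_mx (blk (F2 A B C' D)) ->
  adj A *m B + adj C' *m D = 0.
Proof.
move=> /blk_unitary [h _]; move: (h ord0 i1); rewrite sum2 /F2 /= scale0r //.
Qed.

End Two.

Section Units.
Variable C : numClosedFieldType.
Variable d : nat.

Lemma perm_mxE' (s : {perm 'I_d}) a b : (perm_mx s : 'M[C]_d) a b = (s a == b)%:R.
Proof. by rewrite -(mulmx1 (perm_mx s)) -row_permE !mxE. Qed.

Lemma adj_perm (s : {perm 'I_d}) : adj (perm_mx s : 'M[C]_d) = perm_mx s^-1.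
Proof.
rewrite -tr_perm_mx; apply/matrixP => i j.
by rewrite adjE perm_mxE' rmorph_nat !mxE.
Qed.

Lemma unitary_perm (s : {perm 'I_d}) : unitary_mx (perm_mx s : 'M[C]_d).
Proof.
by split; rewrite adj_perm -perm_mxM ?mulVg ?mulgV perm_mx1.
Qed.

Definition Tm (i j : 'I_d) : 'M[C]_d := perm_mx (tperm i j).
Definition Rm (j : 'I_d) : 'M[C]_d := 1%:M - 2%:R *: delta_mx j j.

Lemma Tm_adj i j : adj (Tm i j) = Tm i j.
Proof. by rewrite /Tm adj_perm tpermV. Qed.

Lemma Tm_unitary i j : unitary_mx (Tm i j).
Proof. exact: unitary_perm. Qed.

Lemma Rm_adj j : adj (Rm j) = Rm j.
Proof.
rewrite /Rm adjB adj1 adjZ rmorph_nat; congr (_ - _ *: _).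
by apply/matrixP => a b; rewrite adjE !mxE rmorph_nat andbC.
Qed.

Lemma Rm_unitary j : unitary_mx (Rm j).
Proof.
have e : Rm j *m Rm j = 1%:M.
  rewrite /Rm mulmxBl !mulmxBr ?mul1mx ?mulmx1 -!scalemxAl -?scalemxAr ?mul1mx ?mulmx1.
  rewrite ?mul_delta_mx; move: (2%:R *: delta_mx j j) => E'.
  by rewrite scaler_nat mulr2n opprB addrK subrK.
by split; rewrite Rm_adj.
Qed.

Lemma TE i j : Tm i j *m delta_mx j j = delta_mx i j.
Proof.
apply/matrixP => a b; rewrite /Tm -row_permE !mxE.
by rewrite (canF_eq (tpermK i j)) tpermR.
Qed.

Lemma ET i j : delta_mx j j *m Tm i j = delta_mx j i.
Proof.
apply/matrixP => a b; rewrite /Tm -{1}tpermV -col_permE !mxE.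
by rewrite (canF_eq (tpermK i j)) tpermR.
Qed.

Lemma two_neq0 : (2%:R : C) != 0.
Proof. by rewrite pnatr_eq0. Qed.

Lemma E_decomp i j : delta_mx i j = 2%:R^-1 *: (Tm i j - Tm i j *m Rm j).
Proof.
rewrite /Rm mulmxBr mulmx1 -scalemxAr TE opprB addrC subrK scalerA.
by rewrite mulVf ?two_neq0 ?scale1r.
Qed.

Lemma E_decomp' i j : delta_mx j i = 2%:R^-1 *: (Tm i j - Rm j *m Tm i j).
Proof.
rewrite /Rm mulmxBl mul1mx -scalemxAl ET opprB addrC subrK scalerA.
by rewrite mulVf ?two_neq0 ?scale1r.
Qed.

Lemma one_sum_delta : (1%:M : 'M[C]_d) = \sum_i delta_mx i i.
Proof.
rewrite {1}(matrix_sum_delta 1%:M); apply: eq_bigr => i _.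
rewrite (bigD1 i) //= big1 ?addr0 => [|k ki]; rewrite !mxE ?eqxx ?scale1r //.
by rewrite eq_sym (negbTE ki) scale0r.
Qed.

End Units.

Section Stack.
Variable C : numClosedFieldType.

Lemma ex_iso m (P : 'M[C]_m) : adj P = P -> P *m P = P ->
  exists S : 'M[C]_(\rank P, m), S *m adj S = 1%:M /\ adj S *m S = P.
Proof.
move=> hP hPP.
have hrb : (row_base P :=: P)%MS := eq_row_base P.
have hS : (schmidt (row_base P) :=: row_base P)%MS.
  by apply: eqmx_schmidt_free; exact: row_base_free.
set S := schmidt (row_base P).
have SS : S *m adj S = 1%:M.
  have /unitarymxP := schmidt_unitarymx (row_base P) (rank_leq_col P).
  by rewrite -/S => <-; congr (_ *m _); apply/matrixP => i j; rewrite adjE !mxE.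
have /submxP [D1 e1] : (P <= S)%MS by rewrite hS hrb.
have /submxP [D2 e2] : (S <= P)%MS by rewrite hS hrb.
have SP : S *m P = S by rewrite e2 -mulmxA hPP.
have aS : adj S = P *m adj S by rewrite -{1}SP adjM hP.
have PA : P = adj S *m adj D1 by rewrite -adjM -e1 hP.
have ASP : adj S *m S *m P = P.
  have h : adj S *m S *m (adj S *m adj D1) = adj S *m adj D1.
    by rewrite !mulmxA -(mulmxA (adj S)) SS mulmx1.
  by rewrite -PA in h.
exists S; split => //.
have h2 : adj (adj S *m S *m P) = P *m adj S *m S by rewrite !adjM adjK hP mulmxA.
transitivity (P *m adj S *m S); first by rewrite -aS.
by rewrite -h2 ASP hP.
Qed.

Variables (d m : nat).

Definition stk k (B : 'I_d -> 'M[C]_(k, m)) : 'M[C]_(d * k, m) :=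
  \matrix_(r, c) B (mxtens_unindex r).1 (mxtens_unindex r).2 c.
Definition rstk k (A : 'I_d -> 'M[C]_(m, k)) : 'M[C]_(m, d * k) :=
  \matrix_(r, c) A (mxtens_unindex c).1 r (mxtens_unindex c).2.
Definition blkL k (G : 'I_d -> 'I_d -> 'M[C]_k) : 'M[C]_(d * k) :=
  \matrix_(r, c) G (mxtens_unindex r).1 (mxtens_unindex c).1
                   (mxtens_unindex r).2 (mxtens_unindex c).2.

Lemma stkE k (B : 'I_d -> 'M[C]_(k, m)) i a c : stk B (mxtens_index (i, a)) c = B i a c.
Proof. by rewrite mxE mxtens_indexK. Qed.
Lemma rstkE k (A : 'I_d -> 'M[C]_(m, k)) r i a : rstk A r (mxtens_index (i, a)) = A i r a.
Proof. by rewrite mxE mxtens_indexK. Qed.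
Lemma blkLE k (G : 'I_d -> 'I_d -> 'M[C]_k) i a j b :
  blkL G (mxtens_index (i, a)) (mxtens_index (j, b)) = G i j a b.
Proof. by rewrite mxE !mxtens_indexK. Qed.

Lemma adj_stk k (B : 'I_d -> 'M[C]_(k, m)) : adj (stk B) = rstk (fun i => adj (B i)).
Proof.
apply/matrixP => r c; case: (mxtens_indexP c) => i a.
by rewrite adjE stkE rstkE adjE.
Qed.

Lemma adj_rstk k (A : 'I_d -> 'M[C]_(m, k)) : adj (rstk A) = stk (fun i => adj (A i)).
Proof.
apply/matrixP => r c; case: (mxtens_indexP r) => i a.
by rewrite adjE stkE rstkE adjE.
Qed.

Lemma stk_rstk k (B : 'I_d -> 'M[C]_(k, m)) (A : 'I_d -> 'M[C]_(m, k)) :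
  stk B *m rstk A = blkL (fun i j => B i *m A j).
Proof.
apply/matrixP => r c; case: (mxtens_indexP r) => i a; case: (mxtens_indexP c) => j b.
rewrite blkLE !mxE; apply: eq_bigr => l _; by rewrite stkE rstkE.
Qed.

Lemma rstk_stk k (A : 'I_d -> 'M[C]_(m, k)) (B : 'I_d -> 'M[C]_(k, m)) :
  rstk A *m stk B = \sum_i A i *m B i.
Proof.
apply/matrixP => r c; rewrite !mxE sum_tens summxE; apply: eq_bigr => i _.
rewrite mxE; apply: eq_bigr => a _; by rewrite stkE rstkE.
Qed.

Lemma rstk_blkL k (A : 'I_d -> 'M[C]_(m, k)) (G : 'I_d -> 'I_d -> 'M[C]_k) :
  rstk A *m blkL G = rstk (fun j => \sum_i A i *m G i j).
Proof.
apply/matrixP => r c; case: (mxtens_indexP c) => j b.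
rewrite rstkE !mxE sum_tens summxE; apply: eq_bigr => i _.
rewrite mxE; apply: eq_bigr => a _; by rewrite rstkE blkLE.
Qed.

Lemma blkL1 k (G : 'I_d -> 'I_d -> 'M[C]_k) :
  (forall i j, G i j = (i == j)%:R *: 1%:M) -> blkL G = 1%:M.
Proof.
move=> hG; rewrite -tens11; apply/matrixP => r c.
case: (mxtens_indexP r) => i a; case: (mxtens_indexP c) => j b.
by rewrite blkLE tensmxE hG !mxE.
Qed.

Lemma tens_blkL k (X : 'M[C]_d) : X *t (1%:M : 'M_k) = blkL (fun i j => X i j *: 1%:M).
Proof.
apply/matrixP => r c.
case: (mxtens_indexP r) => i a; case: (mxtens_indexP c) => j b.
by rewrite blkLE tensmxE !mxE.
Qed.

End Stack.

Section Comb.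
Variable C : numClosedFieldType.
Variables (d m : nat) (Lf : 'M[C]_d -> 'M[C]_m).
Hypothesis Llin : forall (a : C) X Y, Lf (a *: X + Y) = a *: Lf X + Lf Y.
Hypothesis HL : forall F : 'I_2 -> 'I_2 -> 'M[C]_d,
  unitary_mx (blk F) -> unitary_mx (blk (fun x y => Lf (F x y))).

Lemma L0 : Lf 0 = 0.
Proof.
have := Llin 1 0 0; rewrite scaler0 addr0 scale1r.
by move/(congr1 (fun M => M - Lf 0)); rewrite addrK subrr.
Qed.

Lemma LD X Y : Lf (X + Y) = Lf X + Lf Y.
Proof. by have := Llin 1 X Y; rewrite !scale1r. Qed.

Lemma LZ a X : Lf (a *: X) = a *: Lf X.
Proof. by have := Llin a X 0; rewrite !addr0 L0 addr0. Qed.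

Lemma LN X : Lf (- X) = - Lf X.
Proof. by rewrite -scaleN1r LZ scaleN1r. Qed.

Lemma LB X Y : Lf (X - Y) = Lf X - Lf Y.
Proof. by rewrite LD LN. Qed.

Lemma Lsum (I : finType) (F : I -> 'M[C]_d) : Lf (\sum_i F i) = \sum_i Lf (F i).
Proof. exact: (big_morph Lf LD L0). Qed.

Lemma LU U : unitary_mx U -> unitary_mx (Lf U).
Proof.
move=> hU; apply: (@tens1_unitary _ _ 2) => //.
have := @HL (fun x y => (x == y)%:R *: U).
rewrite blk_diag => /(_ (unitary_tens hU (unitary1 C 2))).
by rewrite (blk_ext (G := fun x y => (x == y)%:R *: Lf U)) ?blk_diag // => x y; rewrite LZ.
Qed.


Definition ca : C := 3%:R / 5%:R.
Definition cb : C := 4%:R / 5%:R.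
Lemma ca_conj : ca^* = ca. Proof. by rewrite /ca fmorph_div !rmorph_nat. Qed.
Lemma cb_conj : cb^* = cb. Proof. by rewrite /cb fmorph_div !rmorph_nat. Qed.
Lemma cab : ca * ca + cb * cb = 1.
Proof. by rewrite /ca /cb; field. Qed.
Lemma cab0 : ca * cb != 0.
Proof. by rewrite /ca /cb mulf_neq0 // mulf_neq0 ?invr_eq0 ?pnatr_eq0. Qed.

Lemma LM V W : unitary_mx V -> unitary_mx W ->
  adj (Lf W) *m Lf (W *m V) = adj (Lf 1%:M) *m Lf V.
Proof.
move=> [V1 V2] [W1 W2].
have e1 : adj (W *m V) *m (W *m V) = 1%:M by rewrite adjM !mulmxA -(mulmxA _ _ W) W1 mulmx1 V1.
have e2 : (W *m V) *m adj (W *m V) = 1%:M by rewrite adjM !mulmxA -(mulmxA _ V) V2 mulmx1 W2.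
have e3 : adj (W *m V) *m W = adj V by rewrite adjM -mulmxA W1 mulmx1.
have e4 : W *m V *m adj V = W by rewrite -mulmxA V2 mulmx1.
have e5 : adj W *m (W *m V) = V by rewrite mulmxA W1 mul1mx.
have e6 : V *m adj (W *m V) = adj W by rewrite adjM mulmxA V2 mul1mx.
have hF : unitary_mx (blk (F2 (ca *: 1%:M) (cb *: V) (cb *: W) ((- ca) *: (W *m V)))).
  apply: unitary_F2; rewrite ?scaleNr ?adjN !adjZ ?adj1 ?ca_conj ?cb_conj;
  rewrite ?mulmxN ?mulNmx -!scalemxAl -!scalemxAr !scalerA ?mulmx1 ?mul1mx ?e1 ?e2 ?e3 ?e4 ?e5 ?e6 ?V1 ?V2 ?W1 ?W2;
  rewrite -?scaleNr -?scalerDl ?(mulrC cb ca) ?subrr ?scale0r ?mulrNN ?cab ?scale1r //.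
  1,2: apply/matrixP => i j; rewrite !mxE; case: (i == j); rewrite /= ?mulr1n ?mulr0n ?mulr0 ?mulr1 ?subr0 //.
  1,2: by rewrite addrC -cab; congr (_ + _); exact: opprK.
have := HL hF.
rewrite (blk_ext (G := F2 (Lf (ca *: 1%:M)) (Lf (cb *: V)) (Lf (cb *: W)) (Lf ((- ca) *: (W *m V))))); last first.
  by move=> x y; case: (ord2P x) => ->; case: (ord2P y) => ->.
move/F2_unitary; rewrite !LZ !adjZ ca_conj cb_conj -!scalemxAl -!scalemxAr !scalerA.
rewrite mulrN (mulrC cb ca) scaleNr => /eqP.
rewrite -scalerBr scaler_eq0 (negbTE cab0) /= subr_eq0 => /eqP.
by move=> ->.
Qed.


Definition V0 := Lf 1%:M.
Fact rho_key : unit. Proof. by []. Qed.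
Definition rho X := locked_with rho_key (adj V0 *m Lf X).
Lemma rhoE X : rho X = adj V0 *m Lf X.
Proof. by rewrite /rho unlock. Qed.

Lemma V0U : unitary_mx V0.
Proof. exact/LU/unitary1. Qed.

Lemma rho1 : rho 1%:M = 1%:M.
Proof. by rewrite !rhoE; case: V0U. Qed.

Lemma rhoD X Y : rho (X + Y) = rho X + rho Y.
Proof. by rewrite !rhoE LD mulmxDr. Qed.
Lemma rhoZ a X : rho (a *: X) = a *: rho X.
Proof. by rewrite !rhoE LZ scalemxAr. Qed.
Lemma rhoB X Y : rho (X - Y) = rho X - rho Y.
Proof. by rewrite !rhoE LB mulmxBr. Qed.
Lemma rho0 : rho 0 = 0.
Proof. by rewrite !rhoE L0 mulmx0. Qed.
Lemma rho_sum (I : finType) (F : I -> 'M[C]_d) : rho (\sum_i F i) = \sum_i rho (F i).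
Proof. exact: (big_morph rho rhoD rho0). Qed.

Lemma rhoM V W : unitary_mx V -> unitary_mx W -> rho (W *m V) = rho W *m rho V.
Proof.
move=> hV hW; have [_ h2] := LU hW.
have e : Lf (W *m V) = Lf W *m adj V0 *m Lf V.
  by rewrite -mulmxA -(LM hV hW) mulmxA h2 mul1mx.
by rewrite !rhoE e !mulmxA.
Qed.

Lemma rhoU U : unitary_mx U -> unitary_mx (rho U).
Proof. by move=> hU; rewrite rhoE; apply: unitary_mul; [apply/unitary_adj/V0U | apply: LU]. Qed.

Lemma rho_adjU U : unitary_mx U -> rho (adj U) = adj (rho U).
Proof.
move=> hU; have [h1 h2] := rhoU hU; have [u1 _] := hU.
rewrite -[rho (adj U)]mulmx1 -h2 mulmxA -rhoM ?u1 ?rho1 ?mul1mx //.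
exact: unitary_adj.
Qed.


Opaque rho Rm Tm.

Lemma rho_EU i j W : unitary_mx W ->
  rho (delta_mx i j *m W) = rho (delta_mx i j) *m rho W.
Proof.
move=> hW; have hT := Tm_unitary C i j; have hR := Rm_unitary C j.
have hTR := unitary_mul hT hR; have hRW := unitary_mul hR hW.
rewrite E_decomp -scalemxAl mulmxBl rhoZ rhoB -mulmxA.
rewrite rhoM // [rho (Tm C i j *m (_ *m _))]rhoM //.
by rewrite rhoZ rhoB (rhoM hR hT) -scalemxAl (mulmxBl (rho (Tm C i j))) -(mulmxA (rho (Tm C i j))) (rhoM hW hR).
Qed.

Lemma rho_EE i j k l :
  rho (delta_mx i j *m delta_mx k l) = rho (delta_mx i j) *m rho (delta_mx k l).
Proof.
have hT := Tm_unitary C k l; have hR := Rm_unitary C l.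
have hTR := unitary_mul hT hR.
rewrite [delta_mx k l]E_decomp -scalemxAr mulmxBr rhoZ rhoB.
rewrite !rho_EU //.
by rewrite rhoZ rhoB -mulmxBr scalemxAr.
Qed.

Lemma conj_half : (2%:R^-1 : C)^* = 2%:R^-1.
Proof. by rewrite fmorphV rmorph_nat. Qed.

Lemma rho_adjE i j : adj (rho (delta_mx i j)) = rho (delta_mx j i).
Proof.
rewrite E_decomp E_decomp' !rhoZ !rhoB adjZ adjB conj_half.
have hT := Tm_unitary C i j; have hR := Rm_unitary C j.
have hTR := unitary_mul hT hR.
rewrite -!rho_adjU //.
by rewrite adjM Rm_adj Tm_adj.
Qed.

Definition rE i j := rho (delta_mx i j).

Lemma rE_mul i j k l : rE i j *m rE k l = (j == k)%:R *: rE i l.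
Proof.
rewrite /rE -rho_EE; case: (eqVneq j k) => [->|jk].
  by rewrite mul_delta_mx scale1r.
by rewrite mul_delta_mx_0 // rho0 scale0r.
Qed.

Lemma rE_adj i j : adj (rE i j) = rE j i.
Proof. exact: rho_adjE. Qed.

Lemma rE_sum : \sum_i rE i i = 1%:M.
Proof. by rewrite /rE -rho_sum -one_sum_delta rho1. Qed.

Lemma rho_expand X : rho X = \sum_i \sum_j X i j *: rE i j.
Proof.
rewrite {1}(matrix_sum_delta X) rho_sum; apply: eq_bigr => i _.
by rewrite rho_sum; apply: eq_bigr => j _; rewrite rhoZ.
Qed.


Hypothesis d0 : (0 < d)%N.

Lemma comb : exists k (Phi : 'M[C]_(m, d * k)) (Pi : 'M[C]_(d * k, m)),
  m = (d * k)%N /\ unitary_mx Phi /\ unitary_mx Pi /\ forall X, Lf X = Phi *m (X *t 1%:M) *m Pi.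
Proof.
pose o := Ordinal d0.
have hP : adj (rE o o) = rE o o := rE_adj o o.
have hPP : rE o o *m rE o o = rE o o by rewrite rE_mul eqxx scale1r.
have [S [SS SP]] := ex_iso hP hPP.
move: (\rank (rE o o)) S SS SP => k S SS SP.
pose B := fun j => S *m rE o j.
pose A := fun i => V0 *m rE i o *m adj S.
have adjB j : adj (B j) = rE j o *m adj S by rewrite adjM rE_adj.
have adjA i : adj (A i) = S *m (rE o i *m adj V0) by rewrite !adjM rE_adj adjK.
have SPS : S *m rE o o = S by rewrite -SP mulmxA SS mul1mx.
have key i j : rE i o *m adj S *m (S *m rE o j) = rE i j.
  by rewrite mulmxA -(mulmxA _ (adj S)) SP rE_mul eqxx scale1r rE_mul eqxx scale1r.
have keyM i j p (M : 'M[C]_(p, m)) : M *m rE i o *m adj S *m (S *m rE o j) = M *m rE i j.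
  by rewrite -(key i j) !mulmxA.
have key2 i j : S *m rE o i *m (rE j o *m adj S) = (i == j)%:R *: 1%:M.
  rewrite mulmxA -(mulmxA S) rE_mul -scalemxAr -scalemxAl SPS SS.
  by rewrite eq_sym.
have [V1 V2] := V0U.
have PiU : unitary_mx (stk B).
  split.
    rewrite adj_stk rstk_stk -rE_sum; apply: eq_bigr => i _.
    by rewrite adjB key.
  rewrite adj_stk stk_rstk; apply: blkL1 => i j.
  by rewrite adjB /B key2.
have PhiU : unitary_mx (rstk A).
  split.
    rewrite adj_rstk stk_rstk; apply: blkL1 => i j.
    rewrite adjA /A !mulmxA -(mulmxA _ (adj V0)) V1 mulmx1 -mulmxA.
    exact: key2.
  rewrite adj_rstk rstk_stk.
  transitivity (V0 *m (\sum_i rE i i) *m adj V0); last by rewrite rE_sum mulmx1 V2.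
  rewrite mulmx_sumr mulmx_suml.
  apply: eq_bigr => i _; rewrite adjA /A.
  by rewrite (mulmxA S) mulmxA keyM.
exists k, (rstk A), (stk B); split; last split => //; last split => //.
  have [P1 P2] := PiU.
  apply/eqP; rewrite eqn_leq; apply/andP; split.
    by rewrite -{1}(mxrank1 C m) -P1 (leq_trans (mxrankM_maxr _ _)) ?rank_leq_row.
  by rewrite -{1}(mxrank1 C (d * k)) -P2 (leq_trans (mxrankM_maxl _ _)) ?rank_leq_col.
move=> X; rewrite tens_blkL rstk_blkL rstk_stk.
rewrite -[Lf X]mul1mx -V2 -mulmxA -rhoE rho_expand mulmx_sumr.
rewrite (eq_bigr (fun i => \sum_j X i j *: (V0 *m rE i j))); last first.
  by move=> i _; rewrite mulmx_sumr; apply: eq_bigr => j _; rewrite scalemxAr.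
rewrite exchange_big; apply: eq_bigr => j _; rewrite mulmx_suml; apply: eq_bigr => i _.
by rewrite -scalemxAr mulmx1 -scalemxAl /A /B keyM.
Qed.

End Comb.

Section Lin.
Variable C : numClosedFieldType.
Variables (dP dA dB : nat).
Variable w : 'cV[C]_(dP * dP * dA * dA * dB * dB).

Lemma linA (V : 'M[C]_dB) (a : C) X Y :
  induced_map w (a *: X + Y) V = a *: induced_map w X V + induced_map w Y V.
Proof.
apply/matrixP => f p; rewrite !mxE.
rewrite mulr_sumr -big_split /=; apply: eq_bigr => ai _.
rewrite mulr_sumr -big_split /=; apply: eq_bigr => ao _.
rewrite mulr_sumr -big_split /=; apply: eq_bigr => bi _.
rewrite mulr_sumr -big_split /=; apply: eq_bigr => bo _.
rewrite !mxE; ring.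
Qed.

Lemma linB (U : 'M[C]_dA) (a : C) X Y :
  induced_map w U (a *: X + Y) = a *: induced_map w U X + induced_map w U Y.
Proof.
apply/matrixP => f p; rewrite !mxE.
rewrite mulr_sumr -big_split /=; apply: eq_bigr => ai _.
rewrite mulr_sumr -big_split /=; apply: eq_bigr => ao _.
rewrite mulr_sumr -big_split /=; apply: eq_bigr => bi _.
rewrite mulr_sumr -big_split /=; apply: eq_bigr => bo _.
rewrite !mxE; ring.
Qed.

End Lin.

Unset Implicit Arguments.
Set Strict Implicit.
Set Printing Implicit Defensive.

Theorem theorem4 (R : realType) (dP dF dAI dAO dBI dBO : nat)
  (w : 'cV[R[i]]_(dP * dF * dAI * dAO * dBI * dBO)) :
  (0 < dP)%N -> (0 < dAI)%N -> (0 < dBI)%N ->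
  dAI = dAO -> dBI = dBO -> dP = dF ->
  is_pure_process (proj_of w) ->
  exists (dEA dEB : nat), dP = (dAI * dEA)%N /\ dP = (dBI * dEB)%N /\
  exists (PiA : 'M[R[i]]_(dBO, dBI) -> 'M[R[i]]_(dAI * dEA, dP))
         (PhiA : 'M[R[i]]_(dBO, dBI) -> 'M[R[i]]_(dF, dAO * dEA))
         (PiB : 'M[R[i]]_(dAO, dAI) -> 'M[R[i]]_(dBI * dEB, dP))
         (PhiB : 'M[R[i]]_(dAO, dAI) -> 'M[R[i]]_(dF, dBO * dEB)),
    frame_function_A PiA PhiA /\ frame_function_B PiB PhiB /\
    forall (UA : 'M[R[i]]_(dAO, dAI)) (UB : 'M[R[i]]_(dBO, dBI)),
      unitary_mx UA -> unitary_mx UB ->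
      induced_map w UA UB = PhiA UB *m (UA *t (1%:M : 'M[R[i]]_dEA)) *m PiA UB /\
      induced_map w UA UB = PhiB UA *m (UB *t (1%:M : 'M[R[i]]_dEB)) *m PiB UA.
Proof.
move=> dP0 dA0 dB0 eA eB eP [_ hp].
subst dAO dBO dF.
set C := R[i].
have chA : forall T : 'M[C]_dBI, exists PP : 'M[C]_(dAI * (dP %/ dAI), dP) * 'M[C]_(dP, dAI * (dP %/ dAI)),
    unitary_mx T -> [/\ unitary_mx PP.1, unitary_mx PP.2, dP = (dAI * (dP %/ dAI))%N &
      forall UA, induced_map w UA T = PP.2 *m (UA *t 1%:M) *m PP.1].
  move=> T; case: (classic (unitary_mx T)) => hT; last by exists (0, 0).
  have [k [Phi [Pi [ek [hPhi [hPi hL]]]]]] := comb (linA w T) (pureA hp dP0 hT) dA0.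
  have ek' : (dP %/ dAI)%N = k by rewrite ek mulKn.
  rewrite ek'; exists (Pi, Phi) => _; split => //.
have chB : forall T : 'M[C]_dAI, exists PP : 'M[C]_(dBI * (dP %/ dBI), dP) * 'M[C]_(dP, dBI * (dP %/ dBI)),
    unitary_mx T -> [/\ unitary_mx PP.1, unitary_mx PP.2, dP = (dBI * (dP %/ dBI))%N &
      forall UB, induced_map w T UB = PP.2 *m (UB *t 1%:M) *m PP.1].
  move=> T; case: (classic (unitary_mx T)) => hT; last by exists (0, 0).
  have [k [Phi [Pi [ek [hPhi [hPi hL]]]]]] := comb (linB w T) (pureB hp dP0 hT) dB0.
  have ek' : (dP %/ dBI)%N = k by rewrite ek mulKn.
  rewrite ek'; exists (Pi, Phi) => _; split => //.
pose fA T := proj1_sig (constructive_indefinite_description _ (chA T)).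
pose fB T := proj1_sig (constructive_indefinite_description _ (chB T)).
have hfA T : unitary_mx T -> _ := proj2_sig (constructive_indefinite_description _ (chA T)).
have hfB T : unitary_mx T -> _ := proj2_sig (constructive_indefinite_description _ (chB T)).
exists (dP %/ dAI)%N, (dP %/ dBI)%N.
have [_ _ eA _] := hfA 1%:M (unitary1 C dBI).
have [_ _ eB _] := hfB 1%:M (unitary1 C dAI).
split => //; split => //.
exists (fun T => (fA T).1), (fun T => (fA T).2), (fun T => (fB T).1), (fun T => (fB T).2).
split; [|split].
- by move=> T hT; have [? ? _ _] := hfA T hT.
- by move=> T hT; have [? ? _ _] := hfB T hT.
move=> UA UB hUA hUB; split.
  by have [_ _ _ ->] := hfA UB hUB.
by have [_ _ _ ->] := hfB UA hUA.
Qed.
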